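(* Let $\Gamma$ be a group and let $\mathbb{K}$ be a field. Then the set of normal subgroups $N \subset \Gamma$ such that the quotient group $\Gamma/N$ is L$_{\mathbb{K}}$-surjunctive is closed (and hence compact) in $\mathcal{N}(\Gamma)$.
   Context: $\mathcal{N}(\Gamma)$ denotes the set of normal subgroups of $\Gamma$, viewed as a subset of $\mathcal{P}(\Gamma) = \{0,1\}^\Gamma$ with the prodiscrete (product of discrete) topology; it is compact. For a group $G$ and a vector space $V$ over $\mathbb{K}$, $V^G$ carries the prodiscrete uniform structure and the $G$-shift $(gx)(h) = x(g^{-1}h)$. A linear cellular automaton $\tau \colon V^G \to V^G$ is a $\mathbb{K}$-linear map for which there exist a finite set $S \subset G$ and a (linear) map $\mu \colon V^S \to V$ with $\tau(x)(g) = \mu((g^{-1}x)\vert_S)$ for all $x \in V^G$, $g \in G$. A map is surjunctive if it is surjective or not injective. A group $G$ is L$_{\mathbb{K}}$-surjunctive if for every finite-dimensional vector space $V$ over $\mathbb{K}$, every linear cellular automaton $\tau \colon V^G \to V^G$ is surjunctive. *)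

(* Defs.v *)
From HB Require Import structures.
From mathcomp Require Import all_boot all_order ssralg vector.
From mathcomp Require Import boolp classical_sets topology function_spaces.

Set Implicit Arguments.
Unset Strict Implicit.
Unset Printing Implicit Defensive.

Section Quotient.
Variable G : groupType.
Local Open Scope group_scope.

(* N : G -> bool is a subset of G, i.e. an element of P(G) = {0,1}^G. *)
Definition is_normal_subgroup (N : G -> bool) : Prop :=
  [/\ N 1,
      (forall x y, N x -> N y -> N (x * y^-1)) &
      (forall g x, N x -> N (g^-1 * x * g))].

Definition lcoset (N : G -> bool) (g : G) : G -> bool := fun h => N (g^-1 * h).

Variables (N : G -> bool) (hN : is_normal_subgroup N).

Definition quot_carrier : Type := {A : G -> bool | exists g, A = lcoset N g}.

HB.instance Definition _ := gen_eqMixin quot_carrier.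
HB.instance Definition _ := gen_choiceMixin quot_carrier.

Definition qmk (g : G) : quot_carrier := exist _ (lcoset N g) (ex_intro _ g erefl).
Definition qrepr (A : quot_carrier) : G := sval (cid (svalP A)).

Lemma qreprE A : A = qmk (qrepr A).
Proof.
case: A => A hA; rewrite /qrepr /qmk /=; case: (cid _) => g hg /=.
exact: eq_exist.
Qed.

Lemma N_inv x : N x -> N x^-1.
Proof. by case: hN => h1 hd _ /(hd 1) -/(_ h1); rewrite mul1g. Qed.

Lemma N_mul x y : N x -> N y -> N (x * y).
Proof.
case: hN => _ hd _ Nx /N_inv Ny; by have := hd _ _ Nx Ny; rewrite invgK.
Qed.

Lemma N_conj g x : N x -> N (g^-1 * x * g).
Proof. by case: hN => _ _; apply. Qed.

Lemma qmk_eq a b : N (a^-1 * b) -> qmk a = qmk b.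
Proof.
move=> Nab; apply: eq_exist; apply: funext => h; rewrite /lcoset.
apply/idP/idP => H.
  have := N_mul (N_inv Nab) H; by rewrite invgM invgK mulgA mulgK.
have := N_mul Nab H; by rewrite mulgA mulgK.
Qed.

Lemma qmk_eqP a b : qmk a = qmk b -> N (a^-1 * b).
Proof.
move=> /(congr1 sval) /= /(congr1 (fun f => f b)); rewrite /lcoset mulVg => ->.
by case: hN.
Qed.

Definition qmul (A B : quot_carrier) := qmk (qrepr A * qrepr B).
Definition qone := qmk 1.
Definition qinv (A : quot_carrier) := qmk (qrepr A)^-1.

Lemma qmulE a b : qmul (qmk a) (qmk b) = qmk (a * b).
Proof.
rewrite /qmul; apply: qmk_eq.
have ha := qmk_eqP (esym (qreprE (qmk a))).
have hb := qmk_eqP (esym (qreprE (qmk b))).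
move: ha hb; set a' := qrepr (qmk a); set b' := qrepr (qmk b) => ha hb.
have -> : (a' * b')^-1 * (a * b) = (b'^-1 * (a'^-1 * a) * b') * (b'^-1 * b).
  by rewrite invgM -!mulgA mulVKg.
by apply: N_mul => //; exact: N_conj.
Qed.

Lemma qinvE a : qinv (qmk a) = qmk a^-1.
Proof.
rewrite /qinv; apply: qmk_eq.
have ha := qmk_eqP (esym (qreprE (qmk a))).
move: ha; set a' := qrepr (qmk a) => ha.
rewrite invgK.
have := N_conj a^-1 (N_inv ha); by rewrite invgM !invgK mulVKg.
Qed.

Lemma qind (P : quot_carrier -> Prop) : (forall a, P (qmk a)) -> forall A, P A.
Proof. by move=> H A; rewrite (qreprE A). Qed.

Lemma qmulA : associative qmul.
Proof.
by elim/qind => a; elim/qind => b; elim/qind => c; rewrite !qmulE mulgA.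
Qed.
Lemma qmul1 : left_id qone qmul.
Proof. by elim/qind => a; rewrite /qone qmulE mul1g. Qed.
Lemma qmulr1 : right_id qone qmul.
Proof. by elim/qind => a; rewrite /qone qmulE mulg1. Qed.
Lemma qmulV : left_inverse qone qinv qmul.
Proof. by elim/qind => a; rewrite qinvE qmulE mulVg. Qed.
Lemma qmulrV : right_inverse qone qinv qmul.
Proof. by elim/qind => a; rewrite qinvE qmulE mulgV. Qed.

End Quotient.

Definition quotient_by (G : groupType) (N : G -> bool)
  (hN : is_normal_subgroup N) : Type := quot_carrier N.

HB.instance Definition _ (G : groupType) (N : G -> bool)
  (hN : is_normal_subgroup N) := gen_eqMixin (quotient_by hN).
HB.instance Definition _ (G : groupType) (N : G -> bool)
  (hN : is_normal_subgroup N) := gen_choiceMixin (quotient_by hN).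
HB.instance Definition _ (G : groupType) (N : G -> bool)
  (hN : is_normal_subgroup N) :=
  isGroup.Build (quotient_by hN) (qmulA hN) (qmul1 hN) (qmulr1 hN)
    (qmulV hN) (qmulrV hN).

Section CA.
Variables (K : fieldType) (G : groupType) (V : vectType K).
Local Open Scope ring_scope.

Definition is_K_linear (tau : (G -> V) -> (G -> V)) : Prop :=
  forall (a : K) (x y : G -> V),
    tau (fun h => a *: x h + y h) = (fun h => a *: tau x h + tau y h).

(* tau is a linear cellular automaton: tau is K-linear and there are a finite
   memory set S (listed by the sequence S) and a linear local rule
   mu : V^S -> V with tau(x)(g) = mu ((g^-1 x)|_S), where (g^-1 x)(s) = x(g s). *)
Definition is_linear_CA (tau : (G -> V) -> (G -> V)) : Prop :=
  is_K_linear tau /\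
  exists (S : seq G) (mu : {linear {ffun 'I_(size S) -> V} -> V}),
    forall (x : G -> V) (g : G),
      tau x g = mu [ffun i => x (g * tnth (in_tuple S) i)%g].
End CA.

Definition surjunctive (A B : Type) (f : A -> B) : Prop :=
  (forall y, exists x, f x = y) \/ ~ injective f.

Definition LK_surjunctive (K : fieldType) (G : groupType) : Prop :=
  forall (V : vectType K) (tau : (G -> V) -> (G -> V)),
    is_linear_CA tau -> surjunctive tau.

(* Main.v *)
Require Import Defs.
From HB Require Import structures.
From mathcomp Require Import all_boot all_order ssralg vector.
From mathcomp Require Import boolp classical_sets topology function_spaces.
From mathcomp Require Import cardinality.
Set Implicit Arguments.
Unset Strict Implicit.
Unset Printing Implicit Defensive.
Local Open Scope classical_set_scope.
Import GRing.Theory.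
Local Open Scope ring_scope.

Section FinDim.
Variables (K : fieldType) (V : vectType K).
Local Open Scope ring_scope.

Definition subsp (P : set V) := P 0 /\ forall a x y, P x -> P y -> P (a *: x + y).

Lemma subsp_vspace P : subsp P -> exists U : {vspace V}, forall v, v \in U <-> P v.
Proof.
move=> [P0 PZ].
pose Q m := `[< exists U : {vspace V}, (forall v, v \in U -> P v) /\ \dim U = m >].
have Qex : exists m, Q m.
  exists 0%N; apply/asboolP; exists 0%VS; split; last exact: dimv0.
  by move=> v; rewrite memv0 => /eqP ->.
have Qub : forall m, Q m -> (m <= \dim (fullv : {vspace V}))%N.
  by move=> m /asboolP [U [_ <-]]; apply: dimvS; exact: subvf.
case: (ex_maxnP Qex Qub) => m /asboolP [U [UP dU]] Umax.
exists U => v; split; first exact: UP.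
move=> Pv; apply: contrapT => vU.
have H1 : forall w, w \in (U + <[v]>)%VS -> P w.
  move=> w /memv_addP [u uU [z /vlineP [k ->] ->]].
  by rewrite addrC; apply: PZ => //; exact: UP.
have H2 : (\dim U < \dim (U + <[v]>)%VS)%N.
  rewrite ltn_neqAle dimvS ?addvSl // andbT (dimv_leqif_sup (addvSl U <[v]>%VS)).2.
  apply/negP => /subvP sub; apply: vU; apply: sub; apply/memv_addP.
  by exists 0; [exact: mem0v| exists v; [exact: memv_line | by rewrite add0r]].
have := Umax (\dim (U + <[v]>)%VS).
have : Q (\dim (U + <[v]>)%VS) by apply/asboolP; exists (U + <[v]>)%VS.
move=> /[swap] /[apply]; rewrite -dU; move: H2; rewrite ltnNge => /negP; done.
Qed.


Lemma directed_min (I : Type) (i1 : I) (join : I -> I -> I) (P : I -> set V) :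
  (forall i, subsp (P i)) ->
  (forall i j, P (join i j) `<=` P i /\ P (join i j) `<=` P j) ->
  exists i0, forall j, P i0 `<=` P j.
Proof.
move=> Psub Pjoin.
have HU : forall i, exists U : {vspace V}, forall v, v \in U <-> P i v.
  by move=> i; exact: subsp_vspace.
pose U i := projT1 (cid (HU i)).
have UP i v : v \in U i <-> P i v by exact: (projT2 (cid (HU i))).
pose Q m := `[< exists i, \dim (U i) = m >].
have Qex : exists m, Q m by exists (\dim (U i1)); apply/asboolP; exists i1.
case: (ex_minnP Qex) => m /asboolP [i0 di0] mmin.
exists i0 => j.
pose k := join i0 j.
have sk : (U k <= U i0)%VS.
  by apply/subvP => v /UP /(Pjoin i0 j).1 /UP.
have dk : (\dim (U i0) <= \dim (U k))%N.
  by rewrite di0; apply: mmin; apply/asboolP; exists k.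
have ek : U k = U i0.
  by apply/eqP; rewrite eqEdim sk dk.
move=> v /UP; rewrite -ek => /UP; exact: (Pjoin i0 j).2.
Qed.

Definition affsp (A : set V) :=
  forall a x y z, A x -> A y -> A z -> A (a *: (x - y) + z).

Lemma directed_affine (I : Type) (i1 : I) (join : I -> I -> I) (A : I -> set V) :
  (forall i, affsp (A i)) -> (forall i, exists a, A i a) ->
  (forall i j, A (join i j) `<=` A i /\ A (join i j) `<=` A j) ->
  exists v, forall i, A i v.
Proof.
move=> Aaff Ane Ajoin.
pose D i := [set d | exists x y, [/\ A i x, A i y & d = x - y]].
have Dsub : forall i, subsp (D i).
  move=> i; split.
    have [a Aa] := Ane i; exists a, a; split => //; by rewrite subrr.
  move=> a _ _ [x [y [Ax Ay ->]]] [x' [y' [Ax' Ay' ->]]].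
  exists (a *: (x - y) + x'), y'; split => //; first exact: Aaff.
  by rewrite addrA.
have Djoin : forall i j, D (join i j) `<=` D i /\ D (join i j) `<=` D j.
  move=> i j; split => d [x [y [Ax Ay ->]]]; exists x, y; split => //;
    by apply: (Ajoin i j).1 || apply: (Ajoin i j).2.
have [i0 Hi0] := @directed_min I i1 join D Dsub Djoin.
have [b Ab] := Ane i0.
exists b => j.
pose k := join i0 j.
have [c Ac] := Ane k.
have : D i0 (b - c) by exists b, c; split => //; exact: (Ajoin i0 j).1.
move=> /(Hi0 k) [x [y [Ax Ay e]]].
apply: (Ajoin i0 j).2.
have -> : b = 1 *: (x - y) + c by rewrite scale1r -e subrK.
exact: Aaff.
Qed.

End FinDim.

Section Hard.
Variables (K : fieldType) (G : groupType) (V : vectType K).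
Variables (n : nat) (s : 'I_n -> G) (mu : {linear {ffun 'I_n -> V} -> V}).

Definition tauf (x : G -> V) (g : G) : V := mu [ffun i => x (g * s i)%g].

Lemma tauZD a x y g : tauf (fun h => a *: x h + y h) g = a *: tauf x g + tauf y g.
Proof.
rewrite /tauf -linearZ -linearD; congr (mu _); apply/ffunP => i.
by rewrite !ffunE.
Qed.

Lemma tau_aff a x y z g :
  tauf (fun h => a *: (x h - y h) + z h) g = a *: (tauf x g - tauf y g) + tauf z g.
Proof.
rewrite /tauf -linearB -linearZ -linearD; congr (mu _); apply/ffunP => i.
by rewrite !ffunE.
Qed.

Lemma tau0 g : tauf (fun _ => 0) g = 0.
Proof.
rewrite /tauf; set w := [ffun _ => _].
have -> : w = 0 by apply/ffunP => i; rewrite !ffunE.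
exact: linear0.
Qed.

Lemma tau_local x y f : (forall i, x (f * s i)%g = y (f * s i)%g) -> tauf x f = tauf y f.
Proof. by move=> H; rewrite /tauf; congr (mu _); apply/ffunP => i; rewrite !ffunE H. Qed.

Lemma tau_shift x g f : tauf (fun h => x (g * h)%g) f = tauf x (g * f)%g.
Proof. by rewrite /tauf; congr (mu _); apply/ffunP => i; rewrite !ffunE mulgA. Qed.


Hypothesis inj : injective tauf.

Definition sat (F E : seq G) (p : G -> option V) (x : G -> V) :=
  (forall f, f \in F -> tauf x f = 0) /\ (forall g v, g \in E -> p g = Some v -> x g = v).
Definition good p := forall F E, exists x, sat F E p x.
Definition ext (p q : G -> option V) := forall g w, p g = Some w -> q g = Some w.

Lemma determ : exists F : seq G, forall x, (forall f, f \in F -> tauf x f = 0) -> x 1%g = 0.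
Proof.
apply: contrapT => nF.
have nF' : forall F : seq G, exists x, (forall f, f \in F -> tauf x f = 0) /\ x 1%g <> 0.
  move=> F; apply: contrapT => h; apply: nF; exists F => x Hx.
  apply: contrapT => hx; apply: h; by exists x.
pose P (F : seq G) := [set w | exists x, (forall f, f \in F -> tauf x f = 0) /\ x 1%g = w].
have Psub : forall F, subsp (P F).
  move=> F; split.
    by exists (fun _ => 0); split => // f _; exact: tau0.
  move=> a _ _ [x [Hx <-]] [y [Hy <-]].
  exists (fun h => a *: x h + y h); split => // f fF.
  by rewrite tauZD Hx // Hy // scaler0 addr0.
have Pjoin : forall F F', P (F ++ F') `<=` P F /\ P (F ++ F') `<=` P F'.
  move=> F F'; split => _ [x [Hx <-]]; exists x; split => // f fF; apply: Hx;
    by rewrite mem_cat fF ?orbT.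
have [F0 HF0] := @directed_min K V (seq G) [::] (@cat G) P Psub Pjoin.
have [x0 [Hx0 x01]] := nF' F0.
pose v := x0 1%g.
have vP : forall F, P F v by move=> F; apply: HF0; exists x0.
pose p0 (h : G) := if h == 1%g then Some v else None.
have gp0 : good p0.
  move=> F E; have [x [Hx xv]] := vP F; exists x; split => // g w _.
  by rewrite /p0; case: eqP => // -> [<-].
pose T := {p : G -> option V | good p /\ ext p0 p}.
pose R (p q : T) := `[< ext (sval p) (sval q) >].
have Rrefl : forall t, R t t by move=> t; apply/asboolP.
have Rtrans : forall r s t, R r s -> R s t -> R r t.
  move=> r s' t /asboolP H1 /asboolP H2; apply/asboolP => g w /H1 /H2; done.
have Ranti : forall s t, R s t -> R t s -> s = t.
  move=> [p hp] [q hq] /asboolP /= H1 /asboolP /= H2; apply: eq_exist.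
  apply: funext => g; case pg: (p g) => [w|]; first by rewrite (H1 _ _ pg).
  by case qg: (q g) => [w|] //; rewrite (H2 _ _ qg) in pg.
have Rchain : forall A : set T, total_on A R -> exists t, forall s, A s -> R s t.
  move=> A Atot.
  have [A0|/eqP/set0P [t0 At0]] := pselect (A = set0).
    by exists (exist _ p0 (conj gp0 (fun g w h => h))) => s'; rewrite A0.
  pose pu (g : G) := match pselect (exists w p, A p /\ sval p g = Some w) with
    | left h => Some (projT1 (cid h)) | right _ => None end.
  have puE : forall g w, pu g = Some w -> exists p, A p /\ sval p g = Some w.
    move=> g w; rewrite /pu; case: pselect => // h [<-].
    exact: (projT2 (cid h)).
  have pu_ext : forall p, A p -> ext (sval p) pu.
    move=> p Ap g w pg; rewrite /pu; case: pselect => [h|]; last first.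
      by move=> nh; exfalso; apply: nh; exists w, p.
    case: (cid h) => w' [p' [Ap' p'g]] /=.
    have [/asboolP H|/asboolP H] := Atot p p' Ap Ap'.
      by move: (H _ _ pg); rewrite p'g.
    by move: (H _ _ p'g); rewrite pg.
  have cover : forall E : seq G, exists p, A p /\ (forall g w, g \in E -> pu g = Some w -> sval p g = Some w).
    elim => [|g E [p [Ap Hp]]]; first by exists t0.
    case pug: (pu g) => [w|]; last first.
      exists p; split => // g' w'; rewrite inE => /orP [/eqP ->|]; first by rewrite pug.
      exact: Hp.
    have [p' [Ap' p'g]] := puE _ _ pug.
    have [/asboolP H|/asboolP H] := Atot p p' Ap Ap'.
      exists p'; split => // g' w'; rewrite inE => /orP [/eqP ->|g'E].
        by rewrite pug => -[<-].
      by move=> /(Hp _ _ g'E) /H.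
    exists p; split => // g' w'; rewrite inE => /orP [/eqP ->|g'E].
      by rewrite pug => -[<-]; exact: H.
    exact: Hp.
  have gpu : good pu.
    move=> F E; have [p [Ap Hp]] := cover E.
    have [x [Hx1 Hx2]] := (proj1 (svalP p)) F E.
    exists x; split => // g w gE /(Hp _ _ gE); exact: Hx2.
  have epu : ext p0 pu by move=> g w /(proj2 (svalP t0)); exact: pu_ext.
  exists (exist _ pu (conj gpu epu)) => s' As'; apply/asboolP; exact: pu_ext.
have [pm pmmax] := Zorn Rrefl Rtrans Ranti Rchain.
have total : forall g, sval pm g <> None.
  move=> g pmg.
  pose A (i : seq G * seq G) := [set w | exists x, sat i.1 i.2 (sval pm) x /\ x g = w].
  have Aaff : forall i, affsp (A i).
    move=> i a _ _ _ [x [[Hx1 Hx2] <-]] [y [[Hy1 Hy2] <-]] [z [[Hz1 Hz2] <-]].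
    exists (fun h => a *: (x h - y h) + z h); split => //; split.
      by move=> f fF; rewrite tau_aff Hx1 // Hy1 // Hz1 // subrr scaler0 addr0.
    move=> h w hE ph.
    by rewrite (Hx2 _ _ hE ph) (Hy2 _ _ hE ph) (Hz2 _ _ hE ph) subrr scaler0 add0r.
  have Ane : forall i, exists a, A i a.
    by move=> i; have [x Hx] := (proj1 (svalP pm)) i.1 i.2; exists (x g), x.
  have Ajoin : forall i j, A (i.1 ++ j.1, i.2 ++ j.2) `<=` A i /\
                           A (i.1 ++ j.1, i.2 ++ j.2) `<=` A j.
    move=> i j; split => _ [x [[H1 H2] <-]]; exists x; (split => //; split) => [f fF|h w hE];
      (apply: H1 || apply: H2) => //=; by rewrite mem_cat ?fF ?hE ?orbT.
  have [w Hw] := @directed_affine K V (seq G * seq G) ([::], [::])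
     (fun i j => (i.1 ++ j.1, i.2 ++ j.2)) A Aaff Ane Ajoin.
  pose q (h : G) := if h == g then Some w else sval pm h.
  have gq : good q.
    move=> F E; have [x [[H1 H2] xg]] := Hw (F, E); exists x; split => // h w' hE.
    rewrite /q; case: eqP => [-> [<-] //|_]; exact: H2.
  have epq : ext (sval pm) q.
    move=> h w' ph; rewrite /q; case: eqP => // e; by rewrite e pmg in ph.
  have e0q : ext p0 q by move=> h w' /(proj2 (svalP pm)); exact: epq.
  have := pmmax (exist _ q (conj gq e0q)) (introT (asboolP _) epq).
  move=> /(congr1 sval) /= /(congr1 (fun f => f g)); rewrite /q eqxx pmg; done.
pose xs (h : G) := odflt 0 (sval pm h).
have tx : forall f, tauf xs f = 0.
  move=> f; have [x [H1 H2]] := (proj1 (svalP pm)) [:: f] [seq (f * s i)%g | i <- enum 'I_n].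
  rewrite (@tau_local xs x f); first by rewrite H1 ?mem_head.
  move=> i; rewrite /xs; case e: (sval pm (f * s i)%g) => [w|] /=; last first.
    by exfalso; exact: total _ e.
  by symmetry; apply: H2 e; apply: map_f; rewrite mem_enum.
have xs0 : xs = fun _ => 0 by apply: inj; apply: funext => f; rewrite tx tau0.
apply: x01; have := congr1 (fun f => f 1%g) xs0; rewrite /xs /=.
have -> : sval pm 1%g = Some v by apply: (proj2 (svalP pm)); rewrite /p0 eqxx.
done.
Qed.

End Hard.

Section Reidx.
Variables (K : fieldType) (V : lmodType K) (n m : nat) (e : m = n).
Definition reidx (w : {ffun 'I_m -> V}) : {ffun 'I_n -> V} := [ffun i => w (cast_ord (esym e) i)].
Lemma reidx_lin : linear reidx.
Proof. by move=> a x y; apply/ffunP => i; rewrite !ffunE. Qed.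
HB.instance Definition _ := GRing.isLinear.Build K {ffun 'I_m -> V} {ffun 'I_n -> V} _ reidx reidx_lin.
End Reidx.

Lemma mk_CA (K : fieldType) (G : groupType) (V : vectType K) n (s : 'I_n -> G)
  (mu : {linear {ffun 'I_n -> V} -> V}) : is_linear_CA (tauf s mu).
Proof.
split.
  by move=> a x y; apply: funext => g; exact: tauZD.
pose S := [seq s i | i <- enum 'I_n].
have e : size S = n by rewrite size_map size_enum_ord.
exists S, ((mu \o reidx (V:=V) e)%FUN : {linear {ffun 'I_(size S) -> V} -> V}) => x g /=.
rewrite /tauf; congr (mu _); apply/ffunP => i; rewrite !ffunE.
rewrite (tnth_nth (s i)) /= (nth_map i); last by rewrite size_enum_ord /=.
by rewrite nth_ord_enum.
Qed.

Lemma decoder (K : fieldType) (G : groupType) (V : vectType K) n (s : 'I_n -> G)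
  (mu : {linear {ffun 'I_n -> V} -> V}) : injective (tauf s mu) ->
  exists m (ff : 'I_m -> G) (nu : {ffun 'I_m -> V} -> V),
    forall x g, nu [ffun j => tauf s mu x (g * ff j)%g] = x g.
Proof.
move=> inj; have [F0 HF0] := determ inj.
pose ff j := tnth (in_tuple F0) j.
pose L x := [ffun j => tauf s mu x (ff j)].
pose nu (w : {ffun 'I_(size F0) -> V}) :=
  if pselect (exists x, L x = w) is left h then (projT1 (cid h)) 1%g else 0.
have nuL : forall x, nu (L x) = x 1%g.
  move=> x; rewrite /nu; case: pselect => [h|]; last by move=> nh; exfalso; apply: nh; exists x.
  case: (cid h) => x' e /=.
  have := HF0 (fun h => 1 *: (x' h - x h) + 0).
  rewrite scale1r addr0 => H; apply/eqP; rewrite -subr_eq0; apply/eqP; apply: H.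
  move=> f fF; have /tnthP [j ->] : f \in in_tuple F0 by [].
  rewrite -/(ff j).
  rewrite (_ : tauf _ _ _ _ = 1 *: (tauf s mu x' (ff j) - tauf s mu x (ff j)) + tauf s mu (fun _ => 0) (ff j)); last exact: tau_aff.
  rewrite tau0 addr0 scale1r.
  have := congr1 (fun w : {ffun _ -> V} => w j) e; rewrite /L !ffunE => ->.
  exact: subrr.
exists (size F0), ff, nu => x g.
have := nuL (fun h => x (g * h)%g); rewrite /= mulg1 => <-.
by congr nu; apply/ffunP => j; rewrite !ffunE tau_shift.
Qed.

Section Transfer.
Variables (Gam : groupType) (K : fieldType) (V : vectType K) (n m : nat).
Variables (st : 'I_n -> Gam) (ft : 'I_m -> Gam).
Variables (mu : {linear {ffun 'I_n -> V} -> V}) (nu : {ffun 'I_m -> V} -> V).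

Definition tauN (N : Gam -> bool) (hN : is_normal_subgroup N) :
  (quotient_by hN -> V) -> quotient_by hN -> V :=
  @tauf K (quotient_by hN) V n (fun i => (qmk N (st i) : quotient_by hN)) mu.

Definition sigN (N : Gam -> bool) (hN : is_normal_subgroup N)
  (y : quotient_by hN -> V) (A : quotient_by hN) : V :=
  nu [ffun j => y (A * (qmk N (ft j) : quotient_by hN))%g].
Arguments tauN [N] hN _ _.
Arguments sigN [N] hN y A.

Lemma qmkM (N : Gam -> bool) (hN : is_normal_subgroup N) a b :
  ((qmk N a : quotient_by hN) * (qmk N b : quotient_by hN))%g = qmk N (a * b)%g.
Proof. exact: qmulE. Qed.

Definition Phi (z : Gam -> V) := nu [ffun j => mu [ffun i => z (ft j * st i)%g]].
Definition Psi (z : Gam -> V) := mu [ffun i => nu [ffun j => z (st i * ft j)%g]].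
Definition E1 := 1%g :: [seq (ft j * st i)%g | j <- enum 'I_m, i <- enum 'I_n].
Definition E2 := 1%g :: [seq (st i * ft j)%g | i <- enum 'I_n, j <- enum 'I_m].
Definition resp (N : Gam -> bool) (E : seq Gam) (z : Gam -> V) :=
  forall a b, a \in E -> b \in E -> N (a^-1 * b)%g -> z a = z b.

Lemma ext_fun (N : Gam -> bool) (hN : is_normal_subgroup N) E z : resp N E z ->
  exists x : quotient_by hN -> V, forall a, a \in E -> x (qmk N a) = z a.
Proof.
move=> rz.
exists (fun A => if pselect (exists a, a \in E /\ qmk N a = A) is left h
            then z (projT1 (cid h)) else 0).
move=> a aE; case: pselect => [h|nh]; last by exfalso; apply: nh; exists a.
case: (cid h) => a' [a'E e] /=; apply: rz => //; exact: (qmk_eqP hN e).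
Qed.

Lemma resp_shift (N : Gam -> bool) (hN : is_normal_subgroup N) E (x : quotient_by hN -> V) g :
  resp N E (fun h => x (qmk N (g * h)%g)).
Proof.
move=> a b _ _ Nab /=; congr x; apply: (qmk_eq hN).
by rewrite invgM -mulgA mulKg.
Qed.

Lemma sig_tau_pt (N : Gam -> bool) (hN : is_normal_subgroup N) x g :
  sigN hN (tauN hN x) (qmk N g) = Phi (fun h => x (qmk N (g * h)%g)).
Proof.
rewrite /sigN /Phi; congr nu; apply/ffunP => j; rewrite !ffunE /tauN /tauf.
by congr (mu _); apply/ffunP => i; rewrite !ffunE !qmkM mulgA.
Qed.

Lemma tau_sig_pt (N : Gam -> bool) (hN : is_normal_subgroup N) y g :
  tauN hN (sigN hN y) (qmk N g) = Psi (fun h => y (qmk N (g * h)%g)).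
Proof.
rewrite /tauN /tauf /Psi; congr (mu _); apply/ffunP => i; rewrite !ffunE /sigN.
by congr nu; apply/ffunP => j; rewrite !ffunE (qmkM hN g) qmkM mulgA.
Qed.

Lemma E1P j i : (ft j * st i)%g \in E1.
Proof. by rewrite inE; apply/orP; right; apply: allpairs_f; rewrite mem_enum. Qed.
Lemma E2P i j : (st i * ft j)%g \in E2.
Proof. by rewrite inE; apply/orP; right; apply: allpairs_f; rewrite mem_enum. Qed.

Lemma A1 (N : Gam -> bool) (hN : is_normal_subgroup N) : (forall x, sigN hN (tauN hN x) = x) ->
  forall z, resp N E1 z -> Phi z = z 1%g.
Proof.
move=> H z rz; have [x Hx] := ext_fun hN rz.
have := congr1 (fun f => f (qmk N 1%g)) (H x); rewrite sig_tau_pt /= => e.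
rewrite -(Hx 1%g) ?mem_head // -e /Phi; congr nu; apply/ffunP => j; rewrite !ffunE.
by congr (mu _); apply/ffunP => i; rewrite !ffunE mul1g Hx // E1P.
Qed.

Lemma A1' (N : Gam -> bool) (hN : is_normal_subgroup N) : (forall z, resp N E1 z -> Phi z = z 1%g) ->
  forall x, sigN hN (tauN hN x) = x.
Proof.
move=> H x; apply: funext => A; rewrite (qreprE A) sig_tau_pt H; first by rewrite mulg1.
exact: resp_shift.
Qed.

Lemma A2 (N : Gam -> bool) (hN : is_normal_subgroup N) :
  (exists y A, tauN hN (sigN hN y) A <> y A) -> exists z, resp N E2 z /\ Psi z <> z 1%g.
Proof.
move=> [y [A hA]]; exists (fun h => y (qmk N (qrepr A * h)%g)); split.
  exact: resp_shift.
have := @tau_sig_pt N hN y (qrepr A); rewrite -qreprE /= mulg1 => <-.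
by rewrite -qreprE.
Qed.

Lemma A2' (N : Gam -> bool) (hN : is_normal_subgroup N) :
  (exists z, resp N E2 z /\ Psi z <> z 1%g) -> exists y, tauN hN (sigN hN y) 1%g <> y 1%g.
Proof.
move=> [z [rz hz]]; have [y Hy] := ext_fun hN rz; exists y.
have -> : (1%g : quotient_by hN) = qmk N 1%g by [].
rewrite tau_sig_pt Hy ?mem_head // => e; apply: hz; rewrite -e /Psi.
congr (mu _); apply/ffunP => i; rewrite !ffunE; congr nu; apply/ffunP => j.
by rewrite !ffunE mul1g Hy // E2P.
Qed.

End Transfer.

Lemma resp_agree (Gam : groupType) (K : fieldType) (V : vectType K) (N N' : Gam -> bool)
  (E : seq Gam) (z : Gam -> V) :
  (forall a b, a \in E -> b \in E -> N' (a^-1 * b)%g = N (a^-1 * b)%g) ->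
  resp N E z -> resp N' E z.
Proof. by move=> ag rz a b aE bE; rewrite ag //; exact: rz. Qed.

Lemma key (Gamma : groupType) (K : fieldType) (N : Gamma -> bool)
  (hN : is_normal_subgroup N) : ~ LK_surjunctive K (quotient_by hN) ->
  exists D : seq Gamma, forall (N' : Gamma -> bool) (hN' : is_normal_subgroup N'),
    (forall d, d \in D -> N' d = N d) -> ~ LK_surjunctive K (quotient_by hN').
Proof.
move=> nLK.
have [V [tau [[lin [S [mu Hmu]]] nsj]]] :
    exists (V : vectType K) (tau : (quotient_by hN -> V) -> quotient_by hN -> V), is_linear_CA tau /\ ~ surjunctive tau.
  apply: contrapT => h; apply: nLK => V tau ca; apply: contrapT => ns; apply: h.
  by exists V, tau.
pose s i := tnth (in_tuple S) i.
have etau : tau = tauf s mu by apply: funext => x; apply: funext => g; rewrite Hmu.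
have inj : injective (tauf s mu).
  by rewrite -etau; apply: contrapT => ni; apply: nsj; right.
have nsurj : ~ (forall y, exists x, tau x = y) by move=> h; apply: nsj; left.
have [m [ff [nu Hnu]]] := decoder inj.
pose st i := qrepr (s i); pose ft j := qrepr (ff j).
have eqtau : tauN st mu (hN := hN) = tauf s mu.
  rewrite /tauN; congr tauf; apply: funext => i; rewrite /st -qreprE //.
have H1 : forall x, sigN ft nu (tauN st mu (hN := hN) x) = x.
  move=> x; apply: funext => A; rewrite eqtau /sigN -[RHS](Hnu x A).
  by congr nu; apply/ffunP => j; rewrite !ffunE /ft -qreprE.
have H2 : exists (y : quotient_by hN -> V) (A : quotient_by hN), tauN st mu (sigN ft nu y) A <> y A.
  apply: contrapT => h; apply: nsurj => y; exists (sigN ft nu (hN := hN) y).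
  rewrite etau -eqtau; apply: funext => A; apply: contrapT => ne; apply: h.
  by exists y, A.
have P1 := A1 H1.
have [z [rz2 hz]] := A2 H2.
pose E := E1 st ft ++ E2 st ft.
exists [seq (a^-1 * b)%g | a <- E, b <- E] => N' hN' agr.
have ag : forall a b, a \in E -> b \in E -> N' (a^-1 * b)%g = N (a^-1 * b)%g.
  by move=> a b aE bE; apply: agr; exact: (allpairs_f (fun a b => (a^-1 * b)%g)).
have ag' : forall a b, a \in E -> b \in E -> N (a^-1 * b)%g = N' (a^-1 * b)%g.
  by move=> a b aE bE; rewrite ag.
have sub1 : forall a, a \in E1 st ft -> a \in E by move=> a aE; rewrite mem_cat aE.
have sub2 : forall a, a \in E2 st ft -> a \in E by move=> a aE; rewrite mem_cat aE orbT.
have P1' : forall z, resp N' (E1 st ft) z -> Phi st ft mu nu z = z 1%g.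
  move=> z' rz'; apply: P1; apply: resp_agree rz' => a b aE bE.
  by apply: ag'; apply: sub1.
have H1' := @A1' _ _ _ _ _ st ft mu nu N' hN' P1'.
have [y' ny'] : exists y : quotient_by hN' -> V, tauN st mu (sigN ft nu y) 1%g <> y 1%g.
  apply: (A2' hN'); exists z; split => //; apply: resp_agree rz2 => a b aE bE.
  by apply: ag; apply: sub2.
move=> LK'.
have := LK' V (tauN st mu (hN := hN')) (mk_CA _ _).
case=> [surj|ninj].
  have [x ex] := surj y'; apply: ny'; by rewrite -ex H1'.
by apply: ninj => x1 x2 e; rewrite -(H1' x1) -(H1' x2) e.
Qed.

Local Close Scope ring_scope.
Local Open Scope classical_set_scope.

Section Topo.
Variable Gamma : groupType.
Local Notation PT := {ptws Gamma -> bool}.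

Lemma open_coord (a : Gamma) (P : set bool) : open [set f : PT | P (f a)].
Proof.
have -> : [set f : PT | P (f a)] = (fun f : PT => f a) @^-1` P by [].
apply: open_comp; last exact: discrete_open.
move=> f _; exact: (@proj_continuous Gamma (fun _ => bool) a).
Qed.

Lemma closed_coord (a : Gamma) (P : set bool) : closed [set f : PT | P (f a)].
Proof.
rewrite -openC.
have -> : ~` [set f : PT | P (f a)] = [set f : PT | (~` P) (f a)] by [].
exact: open_coord.
Qed.

Lemma open_agree (D : seq Gamma) (g : PT) :
  open [set f : PT | forall d, d \in D -> f d = g d].
Proof.
elim: D => [|d D IH].
  have -> : [set f : PT | forall d, d \in [::] -> f d = g d] = setT.
    by apply/seteqP; split => // f _ d.
  exact: openT.
have -> : [set f : PT | forall d0, d0 \in d :: D -> f d0 = g d0] =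
  [set f : PT | (fun b => b = g d) (f d)] `&` [set f : PT | forall d, d \in D -> f d = g d].
  apply/seteqP; split => f /=.

    by move=> H; split => [|e eD]; apply: H; rewrite inE ?eqxx ?eD ?orbT.
  by move=> [H1 H2] e; rewrite inE => /orP [/eqP ->|/H2].
exact: (openI (@open_coord d (fun b => b = g d)) IH).
Qed.

Lemma compact_PT : compact (setT : set PT).
Proof.
have := @tychonoff Gamma (fun _ => bool) (fun _ => setT)
  (fun _ => finite_compact (@finite_finset bool setT)).
move=> H; have -> : (setT : set PT) = [set f : PT | forall i, setT (f i)] by apply/seteqP; split.
exact: H.
Qed.


Lemma closed_normal : closed [set N : PT | is_normal_subgroup N].
Proof.
have -> : [set N : PT | is_normal_subgroup N] =
  [set N : PT | (fun b => b) (N 1%g)] `&`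
  (\bigcap_(p in [set: Gamma * Gamma])
     ([set N : PT | (fun b => ~~ b) (N p.1)] `|` [set N : PT | (fun b => ~~ b) (N p.2)]
      `|` [set N : PT | (fun b => b) (N (p.1 * p.2^-1)%g)])) `&`
  (\bigcap_(p in [set: Gamma * Gamma])
     ([set N : PT | (fun b => ~~ b) (N p.2)]
      `|` [set N : PT | (fun b => b) (N (p.1^-1 * p.2 * p.1)%g)])).
  apply/seteqP; split => N /=.
    case=> h1 h2 h3; split; [split|] => //.
      move=> [x y] _ /=.
      case Nx: (N x); last by left; left.
      case Ny: (N y); last by left; right.
      by right; exact: h2.
    move=> [g y] _ /=.
    case Ny: (N y); last by left.
    by right; exact: h3.
  move=> [[h1 h2] h3]; split => //.
    move=> x y Nx Ny; have := h2 (x, y) I => /=.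
    by rewrite Nx Ny => -[[]|].
  move=> g x Nx; have := h3 (g, x) I => /=.
  by rewrite Nx => -[].
apply: closedI; first apply: closedI; first exact: (@closed_coord 1%g (fun b => b)).
  apply: closed_bigI => p _.
  exact: (@closedU PT _ _ (@closedU PT _ _ (@closed_coord p.1 (fun b => ~~ b)) (@closed_coord p.2 (fun b => ~~ b))) (@closed_coord (p.1 * p.2^-1)%g (fun b => b))).
apply: closed_bigI => p _.
exact: (@closedU PT _ _ (@closed_coord p.2 (fun b => ~~ b)) (@closed_coord (p.1^-1 * p.2 * p.1)%g (fun b => b))).
Qed.

End Topo.

Theorem theorem1p4 (Gamma : groupType) (K : fieldType) :
  let NGamma := [set N : {ptws Gamma -> bool} | is_normal_subgroup N] in
  let Surj := [set N : {ptws Gamma -> bool} |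
                exists hN : is_normal_subgroup N,
                  LK_surjunctive K (quotient_by hN)] in
  (exists C : set {ptws Gamma -> bool}, closed C /\ Surj = C `&` NGamma)
  /\ compact Surj.
Proof.
move=> NGamma Surj.
pose good (p : {ptws Gamma -> bool} * seq Gamma) :=
  forall (N'' : Gamma -> bool) (h : is_normal_subgroup N''),
    (forall d, d \in p.2 -> N'' d = p.1 d) -> ~ LK_surjunctive K (quotient_by h).
pose U := \bigcup_(p in good) [set f : {ptws Gamma -> bool} | forall d, d \in p.2 -> f d = p.1 d].
have oU : open U by apply: bigcup_open => p _; exact: open_agree.
have eqS : Surj = ~` U `&` NGamma.
  apply/seteqP; split => N.
    move=> [hN LK]; split; last exact: hN.
    move=> [p gp /= ag]; exact: (gp N hN ag LK).
  move=> [nU hN]; exists hN; apply: contrapT => nLK.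
  have [D HD] := @key Gamma K N hN nLK.
  by apply: nU; exists (N, D) => //.
have cC : closed (~` U) by rewrite closedC.
split; first by exists (~` U).
rewrite eqS; apply: (subclosed_compact _ (@compact_PT Gamma)) => //.
exact: closedI cC (@closed_normal Gamma).
Qed.
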